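(* Let $V$ be the space of real symmetric $d\times d$ matrices, and let $\mathfrak{S}_d$ act on $V$ by simultaneous permutation of rows and columns, $X\mapsto PXP^\top$ for permutation matrices $P$. If $d\ge 2m$, then $\dim(\mathbb{R}[V]_m^{\mathfrak{S}_d})$ is independent of $d$ and satisfies $$\dim\big(\mathbb{R}[V]_m^{\mathfrak{S}_d}\big)\le\sum_{j=0}^m\sum_{\alpha\vdash 2j}q_\alpha.$$
   Context: $\mathbb{R}[V]_m$ denotes the real polynomials on $V$ of total degree at most $m$, and $\mathbb{R}[V]_m^{G}$ the subspace of $G$-invariant ones. $\alpha\vdash 2j$ means $\alpha$ is a partition of $2j$ (non-increasing sequence of positive integers summing to $2j$). For a partition $\alpha$ with $\ell$ parts, $q_\alpha$ is the number of symmetric $\ell\times\ell$ matrices with nonnegative integer entries whose vector of row sums equals $\alpha$. *)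

(* Defs.v *)
From HB Require Import structures.
From mathcomp Require Import all_boot all_order all_algebra all_fingroup.
Set Implicit Arguments. Unset Strict Implicit. Unset Printing Implicit Defensive.
Import Order.TTheory GRing.Theory Num.Theory.
Local Open Scope ring_scope.

(* Coordinates of V = Sym_d(R): the entries X_ij with i <= j. *)
Definition UT (d : nat) := {p : 'I_d * 'I_d | (p.1 <= p.2)%N}.

Definition Mon (d m : nat) :=
  {mu : {ffun UT d -> 'I_m.+1} | (\sum_(k : UT d) (mu k : nat) <= m)%N}.

(* R[V]_m, represented by coefficient vectors over the monomials of degree <= m. *)
Definition PolyV (R : realFieldType) (d m : nat) := {ffun Mon d m -> R^o}.

Definition polyEval (R : realFieldType) (d m : nat) (c : PolyV R d m)
    (X : 'M[R]_d) : R :=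
  \sum_(mu : Mon d m) (c mu : R) *
     \prod_(k : UT d) (X (val k).1 (val k).2) ^+ (val mu k : nat).

Definition Sd_invariant (R : realFieldType) (d m : nat) (c : PolyV R d m) : Prop :=
  forall (s : 'S_d) (X : 'M[R]_d), X^T = X ->
    polyEval c (perm_mx s *m X *m (perm_mx s)^T) = polyEval c X.

Definition dimIs (R : fieldType) (vT : vectType R) (P : vT -> Prop) (k : nat) : Prop :=
  exists U : {vspace vT}, (forall v, v \in U <-> P v) /\ \dim U = k.

Definition is_partition (n : nat) (s : seq nat) : bool :=
  [&& sorted geq s, all (fun x => 0 < x)%N s & sumn s == n].

(* q_alpha: number of symmetric l x l matrices with nonnegative integer entries
   whose row sums are alpha (entries are bounded by sumn alpha). *)
Definition q_alpha (a : seq nat) : nat :=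
  #|[set A : 'M['I_(sumn a).+1]_(size a) |
      (A^T == A) && [forall i, (\sum_j (A i j : nat)) == nth 0 a i]]|.

(* sum over partitions alpha of n of q_alpha; a partition with l parts
   (l <= n, parts <= n) is enumerated exactly once as a function 'I_l -> 'I_n.+1. *)
Definition sum_q (n : nat) : nat :=
  \sum_(l < n.+1)
    \sum_(t : {ffun 'I_l -> 'I_n.+1} |
             is_partition n [seq (t i : nat) | i <- enum 'I_l])
      q_alpha [seq (t i : nat) | i <- enum 'I_l].

(* Main.v *)
Require Import Defs.
From HB Require Import structures.
From mathcomp Require Import all_boot all_order all_algebra all_fingroup.
Import Order.TTheory GRing.Theory Num.Theory.
From mathcomp Require Import zify.
Set Implicit Arguments. Unset Strict Implicit. Unset Printing Implicit Defensive.

Lemma utP d (i j : 'I_d) :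
  ((if (i <= j)%N then (i, j) else (j, i)).1 <= (if (i <= j)%N then (i, j) else (j, i)).2)%N.
Proof. by case: (leqP i j) => //= /ltnW. Qed.

Definition ut d (i j : 'I_d) : UT d :=
  exist (fun p : 'I_d * 'I_d => (p.1 <= p.2)%N) _ (utP i j).

Lemma ut_sym d (i j : 'I_d) : ut i j = ut j i.
Proof.
apply: val_inj => /=; case: (leqP i j) => hij; case: (leqP j i) => hji //.
- by have -> : i = j by apply: val_inj; apply/eqP; rewrite eqn_leq hij hji.
- by move: (ltn_trans hij hji); rewrite ltnn.
Qed.

Lemma ut_val d (k : UT d) : ut (val k).1 (val k).2 = k.
Proof. by apply: val_inj => /=; rewrite (valP k); case: (val k). Qed.

Definition actUT d (s : 'S_d) (k : UT d) : UT d := ut (s (val k).1) (s (val k).2).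

Lemma actUT_ut d (s : 'S_d) i j : actUT s (ut i j) = ut (s i) (s j).
Proof. by rewrite /actUT /=; case: leqP => //; rewrite ut_sym. Qed.

Lemma actUTM d (s t : 'S_d) k : actUT t (actUT s k) = actUT (s * t)%g k.
Proof. by rewrite -(ut_val k) !actUT_ut !permM. Qed.

Lemma actUT1 d k : actUT (1 : 'S_d) k = k.
Proof. by rewrite /actUT !perm1 ut_val. Qed.

Lemma actUTK d (s : 'S_d) : cancel (actUT s) (actUT s^-1%g).
Proof. by move=> k; rewrite actUTM mulgV actUT1. Qed.

Lemma actUTKV d (s : 'S_d) : cancel (actUT s^-1%g) (actUT s).
Proof. by move=> k; rewrite actUTM mulVg actUT1. Qed.

Lemma actUT_inj d (s : 'S_d) : injective (actUT s).
Proof. exact: can_inj (actUTK s). Qed.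

Definition tot d m (f : {ffun UT d -> 'I_m.+1}) : nat := \sum_(k : UT d) (f k : nat).

Definition actF d m (s : 'S_d) (f : {ffun UT d -> 'I_m.+1}) : {ffun UT d -> 'I_m.+1} :=
  [ffun k => f (actUT s k)].

Lemma tot_actF d m s (f : {ffun UT d -> 'I_m.+1}) : tot (actF s f) = tot f.
Proof.
rewrite /tot (reindex_inj (@actUT_inj _ s^-1%g)) /=.
by apply: eq_bigr => k _; rewrite ffunE actUTKV.
Qed.

Lemma actM_proof d m (s : 'S_d) (mu : Mon d m) :
  (\sum_(k : UT d) (actF s (val mu) k : nat) <= m)%N.
Proof. by have := tot_actF s (val mu); rewrite /tot => ->; exact: (valP mu). Qed.

Definition actM d m (s : 'S_d) (mu : Mon d m) : Mon d m :=
  exist _ (actF s (val mu)) (actM_proof s mu).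

Definition w d m (mu : Mon d m) (i j : 'I_d) : nat := val mu (ut i j).

Lemma w_sym d m (mu : Mon d m) i j : w mu i j = w mu j i.
Proof. by rewrite /w ut_sym. Qed.

Lemma w_act d m (s : 'S_d) (mu : Mon d m) i j : w (actM s mu) i j = w mu (s i) (s j).
Proof. by rewrite /w /= ffunE actUT_ut. Qed.

Lemma w_inj d m (a b : Mon d m) : (forall i j, w a i j = w b i j) -> a = b.
Proof.
move=> h; apply: val_inj; apply/ffunP => k; apply: val_inj.
by have := h (val k).1 (val k).2; rewrite /w ut_val.
Qed.

Lemma actM_comp d m (s t : 'S_d) (mu : Mon d m) : actM s (actM t mu) = actM (s * t)%g mu.
Proof. by apply: w_inj => i j; rewrite !w_act !permM. Qed.

Lemma actM1 d m (mu : Mon d m) : actM 1%g mu = mu.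
Proof. by apply: w_inj => i j; rewrite !w_act !perm1. Qed.

Definition conjM d m (a b : Mon d m) : bool := [exists s : 'S_d, actM s a == b].

Lemma conjM_refl d m (a : Mon d m) : conjM a a.
Proof. by apply/existsP; exists 1%g; rewrite actM1. Qed.

Lemma conjM_sym d m (a b : Mon d m) : conjM a b -> conjM b a.
Proof.
case/existsP => s /eqP <-; apply/existsP; exists s^-1%g.
by rewrite actM_comp mulVg actM1.
Qed.

Lemma conjM_trans d m (a b c : Mon d m) : conjM a b -> conjM b c -> conjM a c.
Proof.
case/existsP => s /eqP <-; case/existsP => t /eqP <-; apply/existsP; exists (t * s)%g.
by rewrite actM_comp.
Qed.

Lemma sum_UT d (F : 'I_d -> 'I_d -> nat) :
  \sum_(k : UT d) F (val k).1 (val k).2 = \sum_(p : 'I_d * 'I_d | (p.1 <= p.2)%N) F p.1 p.2.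
Proof.
case: d F => [|d] F.
  rewrite !big1 //; first by case=> [[[]]].
  by case=> [[[]]].
rewrite (reindex (fun k : UT d.+1 => val k)) /=; last first.
  exists (insubd (ut ord0 ord0 : UT d.+1)) => [k _|p hp]; first by rewrite valKd.
  by rewrite insubdK.
by apply: eq_bigl => k; rewrite (valP k).
Qed.

Lemma DC d (V : 'I_d -> 'I_d -> nat) : (forall i j, V i j = V j i) ->
  (2 * \sum_(k : UT d) V (val k).1 (val k).2 =
   \sum_(i < d) \sum_(j < d) V i j + \sum_(i < d) V i i)%N.
Proof.
move=> Vs; rewrite sum_UT pair_big /=.
rewrite [in RHS](bigID (fun p : 'I_d * 'I_d => (p.1 <= p.2)%N)) /=.
have -> : \sum_(p : 'I_d * 'I_d | true && ~~ (p.1 <= p.2)%N) V p.1 p.2 =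
          \sum_(p : 'I_d * 'I_d | (p.1 < p.2)%N) V p.1 p.2.
  rewrite (reindex_inj (h := fun p : 'I_d * 'I_d => (p.2, p.1))); last first.
    by move=> [a b] [c e] /= [-> ->].
  by apply: eq_big => [p|p _] /=; rewrite ?ltnNge // Vs.
have -> : \sum_(p : 'I_d * 'I_d | true && (p.1 <= p.2)%N) V p.1 p.2 =
          \sum_(p : 'I_d * 'I_d | (p.1 <= p.2)%N) V p.1 p.2 by [].
rewrite (bigID (fun p : 'I_d * 'I_d => p.1 == p.2)) /=.
have -> : \sum_(p : 'I_d * 'I_d | (p.1 <= p.2)%N && ~~ (p.1 == p.2)) V p.1 p.2 =
          \sum_(p : 'I_d * 'I_d | (p.1 < p.2)%N) V p.1 p.2.
  by apply: eq_bigl => p; rewrite ltn_neqAle andbC.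
have -> : \sum_(p : 'I_d * 'I_d | (p.1 <= p.2)%N && (p.1 == p.2)) V p.1 p.2 =
          \sum_(i < d) V i i.
  rewrite (reindex_onto (fun i : 'I_d => (i, i)) (fun p => p.1)) /=; last first.
    by move=> [a b] /= /andP [_ /eqP ->].
  by apply: eq_bigl => i; rewrite leqnn !eqxx.
by rewrite mul2n -addnn -!addnA [in RHS](addnC _ (\sum_(i < d) V i i)).
Qed.

Definition Wn d m (mu : Mon d m) (i j : nat) : nat :=
  match (insub i : option 'I_d), (insub j : option 'I_d) with
  | Some i', Some j' => w mu i' j'
  | _, _ => 0%N
  end.

Lemma Wn_ord d m (mu : Mon d m) (i j : 'I_d) : Wn mu i j = w mu i j.
Proof. by rewrite /Wn !valK. Qed.

Lemma Wn_out d m (mu : Mon d m) i j : ((d <= i) || (d <= j))%N -> Wn mu i j = 0%N.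
Proof.
rewrite /Wn; case: insubP => [i' hi _|//]; case: insubP => [j' hj _|//].
by rewrite leqNgt hi leqNgt hj.
Qed.

Lemma Wn_sym d m (mu : Mon d m) i j : Wn mu i j = Wn mu j i.
Proof.
case: (ltnP i d) => hi; last by rewrite !Wn_out ?hi ?orbT.
case: (ltnP j d) => hj; last by rewrite !Wn_out ?hj ?orbT.
rewrite -[i]/(nat_of_ord (Ordinal hi)) -[j]/(nat_of_ord (Ordinal hj)) !Wn_ord.
exact: w_sym.
Qed.

Lemma Wn_le d m (mu : Mon d m) i j : (Wn mu i j <= m)%N.
Proof.
rewrite /Wn; case: insub => // i'; case: insub => // j'.
by rewrite /w -ltnS ltn_ord.
Qed.

Lemma Wn_ext d m (a b : Mon d m) : (forall i j, Wn a i j = Wn b i j) -> a = b.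
Proof. by move=> h; apply: w_inj => i j; rewrite -!Wn_ord. Qed.

Lemma Wn_act d m (s : 'S_d) (mu : Mon d m) (i j : 'I_d) :
  Wn (actM s mu) i j = Wn mu (s i : 'I_d) (s j : 'I_d).
Proof. by rewrite !Wn_ord w_act. Qed.

Definition totM d m (mu : Mon d m) : nat := \sum_(k : UT d) (val mu k : nat).

Lemma totM_le d m (mu : Mon d m) : (totM mu <= m)%N.
Proof. exact: (valP mu). Qed.

Lemma totM_act d m (s : 'S_d) (mu : Mon d m) : totM (actM s mu) = totM mu.
Proof. exact: tot_actF. Qed.

Lemma DCW d m (mu : Mon d m) :
  (\sum_(0 <= i < d) \sum_(0 <= j < d) Wn mu i j + \sum_(0 <= i < d) Wn mu i i
   = 2 * totM mu)%N.
Proof.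
rewrite /totM.
have -> : \sum_(k : UT d) (val mu k : nat) = \sum_(k : UT d) w mu (val k).1 (val k).2.
  by apply: eq_bigr => k _; rewrite /w ut_val.
rewrite DC; last by move=> i j; rewrite w_sym.
rewrite !big_mkord; congr (_ + _); last by apply: eq_bigr => i _; rewrite Wn_ord.
by apply: eq_bigr => i _; rewrite big_mkord; apply: eq_bigr => j _; rewrite Wn_ord.
Qed.

Definition Dg d m (mu : Mon d m) (i : nat) : nat :=
  (\sum_(0 <= j < d) Wn mu i j + Wn mu i i)%N.

Lemma sum_Dg d m (mu : Mon d m) : (\sum_(0 <= i < d) Dg mu i = 2 * totM mu)%N.
Proof. by rewrite -DCW /Dg big_split. Qed.

Lemma Dg_out d m (mu : Mon d m) i : (d <= i)%N -> Dg mu i = 0%N.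
Proof.
move=> h; rewrite /Dg Wn_out ?h // addn0 big1 // => j _.
by rewrite Wn_out ?h.
Qed.

Lemma Wn_le_Dg d m (mu : Mon d m) i j : (Wn mu i j <= Dg mu i)%N.
Proof.
case: (ltnP j d) => hj; last by rewrite Wn_out ?hj ?orbT.
rewrite /Dg (@big_cat_nat _ _ _ j 0 d) ?(ltnW hj) //=.
have : (Wn mu i j <= \sum_(j <= k < d) Wn mu i k)%N by rewrite big_ltn // leq_addr.
lia.
Qed.

Lemma Dg_act d m (s : 'S_d) (mu : Mon d m) (i : 'I_d) :
  Dg (actM s mu) i = Dg mu (s i : 'I_d).
Proof.
rewrite /Dg Wn_act; congr (_ + _)%N.
rewrite !big_mkord [in RHS](reindex_inj (@perm_inj _ s)) /=.
by apply: eq_bigr => j _; rewrite Wn_act.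
Qed.

Lemma zeroM_proof d m : (\sum_(k : UT d) (([ffun=> ord0] : {ffun UT d -> 'I_m.+1}) k : nat) <= m)%N.
Proof. by rewrite big1 // => k _; rewrite ffunE. Qed.

Definition zeroM d m : Mon d m :=
  exist (fun mu : {ffun UT d -> 'I_m.+1} => (\sum_(k : UT d) (mu k : nat) <= m)%N) _ (zeroM_proof d m).

Definition mkF d m (V : nat -> nat -> nat) : {ffun UT d -> 'I_m.+1} :=
  [ffun k : UT d => (inord (V (val k).1 (val k).2) : 'I_m.+1)].

Definition mkM d m V : Mon d m := insubd (zeroM d m) (mkF d m V).

Lemma Wn_mkM d m V :
  (forall i j, V i j = V j i) -> (forall i j, V i j <= m)%N ->
  (\sum_(0 <= i < d) \sum_(0 <= j < d) V i j + \sum_(0 <= i < d) V i i <= 2 * m)%N ->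
  forall i j, Wn (mkM d m V) i j = if ((i < d) && (j < d))%N then V i j else 0%N.
Proof.
move=> Vs Vm Vsum.
have key : forall k : UT d, (mkF d m V k : nat) = V (val k).1 (val k).2.
  by move=> k; rewrite ffunE inordK // ltnS.
have hw : forall i j : 'I_d, (mkF d m V (ut i j) : nat) = V i j.
  by move=> i j; rewrite key /=; case: ifP => //; rewrite Vs.
have ok : (\sum_(k : UT d) (mkF d m V k : nat) <= m)%N.
  rewrite -(leq_pmul2l (isT : (0 < 2)%N)).
  have -> : \sum_(k : UT d) (mkF d m V k : nat) =
            \sum_(k : UT d) (mkF d m V (ut (val k).1 (val k).2) : nat).
    by apply: eq_bigr => k _; rewrite ut_val.
  rewrite (@DC d (fun i j => (mkF d m V (ut i j) : nat))); last by move=> i j; rewrite ut_sym.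
  move: Vsum; rewrite !big_mkord; congr (_ <= _)%N; congr (_ + _)%N.
    by apply: eq_bigr => i _; rewrite big_mkord; apply: eq_bigr => j _; rewrite hw.
  by apply: eq_bigr => i _; rewrite hw.
move=> i j; case: (ltnP i d) => hi; case: (ltnP j d) => hj /=;
  try by rewrite Wn_out ?hi ?hj ?orbT.
rewrite -[i]/(nat_of_ord (Ordinal hi)) -[j]/(nat_of_ord (Ordinal hj)) Wn_ord /w.
by rewrite /mkM insubdK // hw.
Qed.

Definition rep (T : finType) (e : rel T) (x : T) : T :=
  [arg min_(y < x | e x y) enum_rank y].

Definition equivR (T : finType) (e : rel T) :=
  [/\ forall x, e x x, forall x y, e x y -> e y x & forall x y z, e x y -> e y z -> e x z].

Lemma rep_spec (T : finType) (e : rel T) x : equivR e ->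
  e x (rep e x) /\ forall y, e x y -> (enum_rank (rep e x) <= enum_rank y)%N.
Proof.
case=> r _ _; rewrite /rep; case: arg_minnP; first exact: r.
by move=> y hy hmin; split.
Qed.

Lemma rep_eq (T : finType) (e : rel T) x y : equivR e -> e x y -> rep e x = rep e y.
Proof.
move=> E hxy; have [r s t] := E.
have [hx mx] := rep_spec x E; have [hy my] := rep_spec y E.
apply: enum_rank_inj; apply/val_inj/eqP; rewrite /= eqn_leq; apply/andP; split.
  by apply: mx; apply: t hxy hy.
by apply: my; apply: t (s _ _ hxy) hx.
Qed.

Lemma rep_rel (T : finType) (e : rel T) x : equivR e -> e x (rep e x).
Proof. by move=> E; case: (rep_spec x E). Qed.

Definition Reps (T : finType) (e : rel T) := [set rep e x | x in T].
Definition ncl (T : finType) (e : rel T) := #|Reps e|.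

Lemma Reps_fix (T : finType) (e : rel T) r : equivR e -> r \in Reps e -> rep e r = r.
Proof.
move=> E /imsetP [x _ ->]; apply/esym/rep_eq => //.
exact: rep_rel.
Qed.

Lemma ncl_eq (T1 T2 : finType) (e1 : rel T1) (e2 : rel T2) (F : T1 -> T2) :
  equivR e1 -> equivR e2 ->
  (forall a b, e1 a b = e2 (F a) (F b)) -> (forall y, exists x, e2 y (F x)) ->
  ncl e1 = ncl e2.
Proof.
move=> E1 E2 hF hs; have [r1 s1 t1] := E1; have [r2 s2 t2] := E2.
rewrite /ncl -(@card_in_imset _ _ (fun r => rep e2 (F r)) (Reps e1)).
  apply: eq_card => y; apply/imsetP/imsetP.
    by case=> r _ ->; exists (F r).
  case=> x _ ->; have [z hz] := hs x; exists (rep e1 z); first exact: imset_f.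
  apply: rep_eq => //; apply: t2 hz _; rewrite -hF; exact: rep_rel.
move=> a b ha hb /= hab.
rewrite -(Reps_fix E1 ha) -(Reps_fix E1 hb); apply: rep_eq => //.
rewrite hF; apply: t2 (rep_rel (F a) E2) _; rewrite hab; apply: s2; exact: rep_rel.
Qed.

Lemma conjM_equiv d m : equivR (@conjM d m).
Proof. split; [exact: conjM_refl | exact: conjM_sym | exact: conjM_trans]. Qed.

Lemma conjM_nat d m (a b : Mon d m) (s : 'S_d) :
  (forall i j : 'I_d, Wn b i j = Wn a (s i : 'I_d) (s j : 'I_d)) -> conjM a b.
Proof.
move=> h; apply/existsP; exists s; apply/eqP/Wn_ext => i j.
case: (ltnP i d) => hi; last by rewrite !Wn_out ?hi ?orbT.
case: (ltnP j d) => hj; last by rewrite !Wn_out ?hj ?orbT.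
rewrite -[i]/(nat_of_ord (Ordinal hi)) -[j]/(nat_of_ord (Ordinal hj)).
by rewrite Wn_act h.
Qed.

Lemma conjM_natE d m (a b : Mon d m) : conjM a b ->
  exists s : 'S_d, forall i j : 'I_d, Wn b i j = Wn a (s i : 'I_d) (s j : 'I_d).
Proof. by case/existsP => s /eqP <-; exists s => i j; rewrite Wn_act. Qed.

Lemma perm_prefix d l (f : nat -> nat) : (l <= d)%N ->
  (forall i, i < l -> f i < l)%N ->
  (forall i j, i < l -> j < l -> f i = f j -> i = j)%N ->
  exists s : 'S_d, forall i : 'I_d, val (s i) = if (i < l)%N then f i else i.
Proof.
move=> hl hf hinj.
pose g (i : 'I_d) : 'I_d := if (i < l)%N then insubd i (f i) else i.
have gE : forall i, val (g i) = if (i < l)%N then f i else i.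
  move=> i; rewrite /g; case: ifP => // hi.
  by rewrite val_insubd (leq_trans (hf _ hi) hl).
have ginj : injective g.
  move=> i j /(congr1 val); rewrite !gE => e; apply: val_inj => /=.
  case: ifP e => hi; case: ifP => hj e.
  - exact: hinj.
  - by move: (hf _ hi); rewrite e hj.
  - by move: (hf _ hj); rewrite -e hi.
  - exact: e.
by exists (perm ginj) => i; rewrite permE gE.
Qed.

Lemma sum_ext0 n d (F : nat -> nat) : (n <= d)%N -> (forall i, n <= i -> F i = 0)%N ->
  (\sum_(0 <= i < d) F i = \sum_(0 <= i < n) F i)%N.
Proof.
move=> hnd hF; rewrite (@big_cat_nat _ _ _ n 0 d) //=.
have -> : (\sum_(n <= i < d) F i = 0)%N.
  by rewrite big_nat_cond big1 // => i /andP [/andP [hi _] _]; apply: hF.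
by rewrite addn0.
Qed.

Lemma prefix_count (P : nat -> bool) d :
  (forall i j, i <= j -> P j -> P i)%N -> (forall i, d <= i -> ~~ P i)%N ->
  forall i, P i = (i < \sum_(0 <= j < d) P j)%N.
Proof.
elim: d => [|d IH] anti out i.
  by rewrite big_geq // ltn0; apply/negbTE/out.
case: (boolP (P d)) => hd.
  have -> : (\sum_(0 <= j < d.+1) P j = d.+1)%N.
    rewrite -[X in _ = X](card_ord d.+1) -sum1_card big_mkord.
    by apply: eq_bigr => j _; rewrite (anti j d) // -ltnS.
  case: (ltnP i d.+1) => hi; first by apply: anti hd; rewrite -ltnS.
  by apply/negbTE/out.
rewrite big_nat_recr //= (negbTE hd) addn0; apply: IH => // j hj.
case: (ltngtP d j) => [h|h|<-] //; first by apply: out.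
by move: hj; rewrite leqNgt h.
Qed.

Definition sortedM d m (mu : Mon d m) :=
  forall i j, (i <= j)%N -> (Dg mu j <= Dg mu i)%N.

Definition lc d m (mu : Mon d m) : nat := \sum_(0 <= j < d) (0 < Dg mu j)%N.

Lemma sorted_prefix d m (mu : Mon d m) : sortedM mu ->
  forall i, (0 < Dg mu i)%N = (i < lc mu)%N.
Proof.
move=> hs; apply: prefix_count => [i j hij hj|i hi].
  by apply: leq_trans hj (hs _ _ hij).
by rewrite Dg_out.
Qed.

Lemma lc_le d m (mu : Mon d m) : (lc mu <= 2 * totM mu)%N.
Proof.
rewrite /lc -sum_Dg; apply: leq_sum => i _; by case: (Dg mu i).
Qed.

Lemma sortP d m (mu : Mon d m) : exists s : 'S_d, sortedM (actM s mu).
Proof.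
pose leT := fun i j : 'I_d => (Dg mu j <= Dg mu i)%N.
have tot : total leT by move=> i j; rewrite /leT leq_total.
have tr : transitive leT by move=> j i k; rewrite /leT => h1 h2; apply: leq_trans h2 h1.
have rf : reflexive leT by move=> i; rewrite /leT.
have pe : perm_eq (sort leT (enum 'I_d)) (ord_tuple d) by rewrite perm_sort.
case/tuple_permP: pe => p hp.
have so := sort_sorted tot (enum 'I_d).
rewrite hp in so.
exists p => i j hij.
case: (ltnP j d) => hj; last by rewrite Dg_out.
have hi : (i < d)%N by apply: leq_ltn_trans hij hj.
rewrite -[i]/(nat_of_ord (Ordinal hi)) -[j]/(nat_of_ord (Ordinal hj)) !Dg_act.
have := sorted_leq_nth tr rf (Ordinal hi) so.
move/(_ i j); rewrite !inE size_tuple hi hj => /(_ isT isT hij).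
rewrite /= !(nth_map (Ordinal hi)) ?size_enum_ord //.
rewrite -enumT (nth_ord_enum (Ordinal hi) (Ordinal hi)).
rewrite (nth_ord_enum (Ordinal hi) (Ordinal hj)) !tnth_ord_tuple //.
all: try by rewrite -enumT size_enum_ord.
Qed.

Lemma Wn_Dg0 d m (mu : Mon d m) i j : Dg mu i = 0%N -> Wn mu i j = 0%N /\ Wn mu j i = 0%N.
Proof.
move=> h; have := Wn_le_Dg mu i j; rewrite h leqn0 => /eqP e.
by split => //; rewrite Wn_sym.
Qed.

Lemma sum2_ext0 n d (F : nat -> nat -> nat) : (n <= d)%N ->
  (forall i j, ((n <= i) || (n <= j))%N -> F i j = 0%N) ->
  (\sum_(0 <= i < d) \sum_(0 <= j < d) F i j + \sum_(0 <= i < d) F i i =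
   \sum_(0 <= i < n) \sum_(0 <= j < n) F i j + \sum_(0 <= i < n) F i i)%N.
Proof.
move=> hnd hF; congr (_ + _)%N; last by apply: sum_ext0 => // i hi; apply: hF; rewrite hi.
rewrite (sum_ext0 hnd); last first.
  by move=> i hi; rewrite big1 // => j _; apply: hF; rewrite hi.
by apply: eq_bigr => i _; apply: sum_ext0 => // j hj; apply: hF; rewrite hj orbT.
Qed.

Definition ext d n m (mu : Mon n m) : Mon d m := mkM d m (Wn mu).
Definition res n d m (mu : Mon d m) : Mon n m := mkM n m (Wn mu).

Lemma Wn_extM n d m (mu : Mon n m) : (n <= d)%N -> forall i j, Wn (ext d mu) i j = Wn mu i j.
Proof.
move=> hnd i j; rewrite Wn_mkM.
- case: ifP => // /negbT; rewrite negb_and -!leqNgt => h.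
  by rewrite Wn_out //; case/orP: h => h; rewrite (leq_trans hnd h) ?orbT.
- exact: Wn_sym.
- exact: Wn_le.
rewrite (sum2_ext0 hnd); last by move=> a b h; rewrite Wn_out.
by rewrite DCW leq_mul2l totM_le orbT.
Qed.

Lemma Dg_extM n d m (mu : Mon n m) : (n <= d)%N -> forall i, Dg (ext d mu) i = Dg mu i.
Proof.
move=> hnd i; rewrite /Dg Wn_extM //; congr (_ + _)%N.
rewrite (sum_ext0 hnd); last by move=> j hj; rewrite Wn_extM // Wn_out // hj orbT.
by apply: eq_bigr => j _; rewrite Wn_extM.
Qed.

Lemma Wn_resM n d m (mu : Mon d m) : (n <= d)%N -> (forall i, n <= i -> Dg mu i = 0)%N ->
  forall i j, Wn (res n mu) i j = Wn mu i j.
Proof.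
move=> hnd hz i j.
have z2 : forall a b, ((n <= a) || (n <= b))%N -> Wn mu a b = 0%N.
  move=> a b /orP [h|h]; first by case: (Wn_Dg0 b (hz _ h)).
  by case: (Wn_Dg0 a (hz _ h)).
rewrite Wn_mkM.
- case: ifP => // /negbT; rewrite negb_and -!leqNgt => h; by rewrite z2.
- exact: Wn_sym.
- exact: Wn_le.
rewrite -(sum2_ext0 hnd) //.
by rewrite DCW leq_mul2l totM_le orbT.
Qed.

Lemma lc_ext n d m (mu : Mon n m) : (n <= d)%N -> lc (ext d mu) = lc mu.
Proof.
move=> hnd; rewrite /lc (sum_ext0 hnd); last by move=> i hi; rewrite Dg_extM // Dg_out.
by apply: eq_bigr => i _; rewrite Dg_extM.
Qed.

Lemma ext_conj n d m (a b : Mon n m) : (n <= d)%N -> conjM a b -> conjM (ext d a) (ext d b).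
Proof.
move=> hnd /conjM_natE [s hs].
pose f := fun i : nat => if (insub i : option 'I_n) is Some i' then val (s i') else i.
have fE : forall i : 'I_n, f i = s i by move=> i; rewrite /f valK.
have [t ht] : exists t : 'S_d, forall i : 'I_d, val (t i) = if (i < n)%N then f i else i.
  apply: perm_prefix => //.
    by move=> i hi; rewrite -[i]/(nat_of_ord (Ordinal hi)) fE.
  move=> i j hi hj; rewrite -[i]/(nat_of_ord (Ordinal hi)) -[j]/(nat_of_ord (Ordinal hj)) !fE.
  by move/val_inj/perm_inj => [].
apply: (conjM_nat (s := t)) => i j; rewrite !Wn_extM // !ht.
case: (ltnP i n) => hi; last first.
  by rewrite !Wn_out ?hi.
case: (ltnP j n) => hj; last by rewrite !Wn_out ?hj ?orbT.
rewrite -[nat_of_ord i]/(nat_of_ord (Ordinal hi)) -[nat_of_ord j]/(nat_of_ord (Ordinal hj)) !fE.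
exact: hs.
Qed.

Lemma sorted_conj_ext n d m (a b : Mon n m) : (2 * m <= n)%N -> (n <= d)%N ->
  sortedM a -> sortedM b -> conjM (ext d a) (ext d b) -> conjM a b.
Proof.
move=> h2m hnd sa sb /existsP [s /eqP hs].
have Dgs : forall i : 'I_d, Dg b i = Dg a (s i).
  by move=> i; rewrite -!(Dg_extM a hnd) -!(Dg_extM b hnd) -hs Dg_act.
have Wns : forall i j : 'I_d, Wn b i j = Wn a (s i) (s j).
  by move=> i j; rewrite -!(Wn_extM a hnd) -!(Wn_extM b hnd) -hs Wn_act.
have lab : lc b = lc a.
  rewrite -(lc_ext a hnd) -(lc_ext b hnd) /lc !big_mkord.
  rewrite [in RHS](reindex_inj (@perm_inj _ s)) /=.
  by apply: eq_bigr => i _; rewrite !Dg_extM // Dgs.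
set l := lc a.
have hl : (l <= n)%N.
  by apply: leq_trans (lc_le a) _; apply: leq_trans h2m; rewrite leq_mul2l totM_le orbT.
pose f := fun i : nat => if (insub i : option 'I_d) is Some i' then val (s i') else i.
have fE : forall i : 'I_d, f i = s i by move=> i; rewrite /f valK.
have fl : forall i, (i < l)%N -> (f i < l)%N.
  move=> i hi; have hid : (i < d)%N by apply: leq_trans hnd; apply: leq_trans hl.
  rewrite -[i]/(nat_of_ord (Ordinal hid)) fE -(sorted_prefix sa) -Dgs.
  by rewrite (sorted_prefix sb) lab.
have [t ht] : exists t : 'S_n, forall i : 'I_n, val (t i) = if (i < l)%N then f i else i.
  apply: perm_prefix => // i j hi hj.
  have hid : (i < d)%N by apply: leq_trans hnd; apply: leq_trans hl.
  have hjd : (j < d)%N by apply: leq_trans hnd; apply: leq_trans hl.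
  rewrite -[i]/(nat_of_ord (Ordinal hid)) -[j]/(nat_of_ord (Ordinal hjd)) !fE.
  by move/val_inj/perm_inj => [].
apply: (conjM_nat (s := t)) => i j; rewrite !ht.
case: (ltnP i l) => hi; last first.
  have z1 : Dg b i = 0%N by apply/eqP; rewrite -leqn0 leqNgt (sorted_prefix sb) lab -leqNgt.
  have z2 : Dg a i = 0%N by apply/eqP; rewrite -leqn0 leqNgt (sorted_prefix sa) -leqNgt.
  by case: (Wn_Dg0 j z1) => -> _; case: (Wn_Dg0 (if (j < l)%N then f j else j) z2) => ->.
case: (ltnP j l) => hj; last first.
  have z1 : Dg b j = 0%N by apply/eqP; rewrite -leqn0 leqNgt (sorted_prefix sb) lab -leqNgt.
  have z2 : Dg a j = 0%N by apply/eqP; rewrite -leqn0 leqNgt (sorted_prefix sa) -leqNgt.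
  by case: (Wn_Dg0 i z1) => _ ->; case: (Wn_Dg0 (f i) z2) => _ ->.
have hid : (i < d)%N by apply: leq_trans hnd; apply: leq_trans hl.
have hjd : (j < d)%N by apply: leq_trans hnd; apply: leq_trans hl.
rewrite -[nat_of_ord i]/(nat_of_ord (Ordinal hid)) -[nat_of_ord j]/(nat_of_ord (Ordinal hjd)).
by rewrite !fE Wns.
Qed.

Lemma ncl_indep n d m : (2 * m <= n)%N -> (n <= d)%N ->
  ncl (@conjM n m) = ncl (@conjM d m).
Proof.
move=> h2m hnd; apply: (ncl_eq (F := @ext d n m)); try exact: conjM_equiv.
  move=> a b; apply/idP/idP; first exact: ext_conj.
  have [sa ha] := sortP a; have [sb hb] := sortP b.
  have ca : conjM a (actM sa a) by apply/existsP; exists sa.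
  have cb : conjM b (actM sb b) by apply/existsP; exists sb.
  move=> hab; refine (conjM_trans ca _); refine (conjM_trans _ (conjM_sym cb)).
  apply: (sorted_conj_ext (d := d)) => //.
  apply: conjM_trans (ext_conj hnd (conjM_sym ca)) _.
  exact: conjM_trans hab (ext_conj hnd cb).
move=> y; have [s hs] := sortP y.
set y' := actM s y in hs.
have z : forall i, (n <= i)%N -> Dg y' i = 0%N.
  move=> i hi; apply/eqP; rewrite -leqn0 leqNgt (sorted_prefix hs) -leqNgt.
  apply: leq_trans hi; apply: leq_trans (lc_le y') _; apply: leq_trans h2m.
  by rewrite leq_mul2l totM_le orbT.
exists (res n y'); have -> : ext d (res n y') = y'.
  by apply: Wn_ext => i j; rewrite Wn_extM // Wn_resM.
by apply/existsP; exists s.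
Qed.

Definition sortedb d m (x : Mon d m) : bool :=
  [forall i : 'I_d, forall j : 'I_d, (i <= j)%N ==> (Dg x j <= Dg x i)%N].

Lemma sortedbP d m (x : Mon d m) : sortedb x -> sortedM x.
Proof.
move=> /forallP h i j hij.
case: (ltnP j d) => hj; last by rewrite Dg_out.
have hi : (i < d)%N by apply: leq_ltn_trans hij hj.
by have /forallP/(_ (Ordinal hj))/implyP := h (Ordinal hi); apply.
Qed.

Lemma sortedMb d m (x : Mon d m) : sortedM x -> sortedb x.
Proof. by move=> h; apply/forallP => i; apply/forallP => j; apply/implyP; apply: h. Qed.

Definition srt d m (r : Mon d m) : Mon d m :=
  actM (odflt 1%g [pick s : 'S_d | sortedb (actM s r)]) r.

Lemma srt_spec d m (r : Mon d m) : sortedM (srt r) /\ conjM r (srt r).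
Proof.
rewrite /srt; case: pickP => [s hs|h] /=.
  by split; [exact: sortedbP | apply/existsP; exists s].
have [s hs] := sortP r; by move: (h s); rewrite sortedMb.
Qed.

Lemma Dg_le_tot d m (x : Mon d m) i : (Dg x i <= 2 * totM x)%N.
Proof.
case: (ltnP i d) => hi; last by rewrite Dg_out.
rewrite -sum_Dg (@big_cat_nat _ _ _ i 0 d) ?(ltnW hi) //=.
have : (Dg x i <= \sum_(i <= k < d) Dg x k)%N by rewrite big_ltn // leq_addr.
lia.
Qed.

Lemma sum_delta l i X : (i < l)%N -> (\sum_(0 <= k < l) ((i == k) * X) = X)%N.
Proof.
move=> hi; rewrite (@big_cat_nat _ _ _ i 0 l) ?(ltnW hi) //=.
have -> : (\sum_(i <= k < l) ((i == k) * X) = X + \sum_(i.+1 <= k < l) ((i == k) * X))%N.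
  by rewrite big_ltn // eqxx mul1n.
rewrite big_nat_cond big1 ?add0n; last by move=> k /andP [/andP [_ hk] _]; rewrite gtn_eqF.
rewrite big_nat_cond big1 ?addn0 // => k /andP [/andP [hk _] _].
by rewrite ltn_eqF.
Qed.

Lemma Wn_le_row d m (x : Mon d m) i k : (Wn x i k <= \sum_(0 <= j < d) Wn x i j)%N.
Proof.
case: (ltnP k d) => hk; last by rewrite Wn_out // hk orbT.
rewrite (@big_cat_nat _ _ _ k 0 d) ?(ltnW hk) //=.
have : (Wn x i k <= \sum_(k <= j < d) Wn x i j)%N by rewrite big_ltn // leq_addr.
lia.
Qed.

Lemma Aval_le d m (x : Mon d m) i k : (Wn x i k + (i == k) * Wn x i i <= Dg x i)%N.
Proof.
rewrite /Dg; case: eqP => [->|_]; last by rewrite mul0n addn0 Wn_le_Dg.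
by rewrite mul1n leq_add2r Wn_le_row.
Qed.

Lemma seq_tE d m (s : Mon d m) (j : nat) l : totM s = j ->
  [seq (([ffun i : 'I_l => (inord (Dg s i) : 'I_(2 * j).+1)]) i : nat) | i <- enum 'I_l]
  = [seq Dg s i | i <- iota 0 l].
Proof.
move=> hj; rewrite -val_enum_ord -map_comp; apply: eq_map => i /=.
by rewrite ffunE inordK // ltnS -hj Dg_le_tot.
Qed.

Lemma sumn_Dg d m (s : Mon d m) : sortedM s ->
  sumn [seq Dg s i | i <- iota 0 (lc s)] = (2 * totM s)%N.
Proof.
move=> hs; rewrite sumnE big_map -sum_Dg.
have -> : \sum_(i <- iota 0 (lc s)) Dg s i = \sum_(0 <= i < lc s) Dg s i.
  by rewrite /index_iota subn0.
apply/esym/sum_ext0.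
  apply/negP => /negP; rewrite -ltnNge => h.
  by move: (sorted_prefix hs d); rewrite h Dg_out.
by move=> i hi; apply/eqP; rewrite -leqn0 leqNgt (sorted_prefix hs) -leqNgt.
Qed.

Lemma partE d m (s : Mon d m) : sortedM s ->
  is_partition (2 * totM s) [seq Dg s i | i <- iota 0 (lc s)].
Proof.
move=> hs; apply/and3P; split.
- apply: (homo_sorted (e := ltn)); last exact: iota_ltn_sorted.
  by move=> x y hxy; apply: hs; apply: ltnW.
- apply/allP => x /mapP [i]; rewrite mem_iota add0n => /andP [_ hi] ->.
  by rewrite (sorted_prefix hs).
- by rewrite sumn_Dg.
Qed.

Lemma fiberE m (r : Mon (2 * m) m) (j : 'I_m.+1) (l : 'I_(2 * j).+1) :
  (inord (totM (srt r)) : 'I_m.+1) == j -> (inord (lc (srt r)) : 'I_(2 * j).+1) == l ->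
  totM (srt r) = j /\ lc (srt r) = l.
Proof.
move=> /eqP h1 /eqP h2.
have e1 : totM (srt r) = j by rewrite -h1 inordK // ltnS totM_le.
split => //; rewrite -h2 inordK // ltnS -e1; exact: lc_le.
Qed.

Lemma bound m : (ncl (@conjM (2 * m) m) <= \sum_(j < m.+1) sum_q (2 * j))%N.
Proof.
rewrite /ncl -sum1_card.
rewrite (partition_big (fun r => (inord (totM (srt r)) : 'I_m.+1)) xpredT) //=.
apply: leq_sum => j _.
rewrite /sum_q.
rewrite (partition_big (fun r => (inord (lc (srt r)) : 'I_(2 * j).+1)) xpredT) //=.
apply: leq_sum => l _.
rewrite (partition_big (fun r => [ffun i : 'I_l => (inord (Dg (srt r) i) : 'I_(2 * j).+1)])
  (fun t : {ffun 'I_l -> 'I_(2 * j).+1} => is_partition (2 * j) [seq (t i : nat) | i <- enum 'I_l])); last first.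
  move=> r /andP [/andP [_ h1] h2]; have [e1 e2] := fiberE h1 h2.
  rewrite seq_tE //; have := partE (proj1 (srt_spec r)); by rewrite e1 e2.
apply: leq_sum => t ht.
rewrite sum1dep_card /q_alpha.
set a := [seq (t i : nat) | i <- enum 'I_l].
set P := [set x | _].
have facts : forall r, r \in P -> [/\ r \in Reps (@conjM (2 * m) m), sortedM (srt r),
    totM (srt r) = j, lc (srt r) = l & a = [seq Dg (srt r) i | i <- iota 0 l]].
  move=> r; rewrite inE => /andP [/andP [/andP [hR h1] h2] /eqP h3].
  have [e1 e2] := fiberE h1 h2; split => //; first exact: (proj1 (srt_spec r)).
  by rewrite /a -h3 seq_tE.
have sizeA : forall r, r \in P -> size a = l.
  by move=> r /facts [_ _ _ _ ->]; rewrite size_map size_iota.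
have sumA : forall r, r \in P -> sumn a = (2 * j)%N.
  by move=> r /facts [_ hs e1 e2 ->]; rewrite -e2 sumn_Dg // e1.
pose phi := fun r : Mon (2 * m) m =>
  (\matrix_(i < size a, k < size a)
     (inord (Wn (srt r) i k + (i == k :> nat) * Wn (srt r) i i)%N : 'I_(sumn a).+1))%R.
have phiE : forall r, r \in P -> forall (i k : 'I_(size a)),
    (phi r i k : nat) = (Wn (srt r) i k + (i == k :> nat) * Wn (srt r) i i)%N.
  move=> r hr i k; rewrite mxE inordK // ltnS; apply: leq_trans (Aval_le _ _ _) _.
  by rewrite (sumA r hr); have [_ _ e1 _ _] := facts r hr; rewrite -e1; apply: Dg_le_tot.
have zero_out : forall r, r \in P -> forall i k, ((l <= i) || (l <= k))%N -> Wn (srt r) i k = 0%N.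
  move=> r hr i k h; have [_ hs _ e2 _] := facts r hr.
  have z : forall x, (l <= x)%N -> Dg (srt r) x = 0%N.
    by move=> x hx; apply/eqP; rewrite -leqn0 leqNgt (sorted_prefix hs) e2 -leqNgt.
  by case/orP: h => h; [case: (Wn_Dg0 k (z _ h)) | case: (Wn_Dg0 i (z _ h))].
have phiinj : {in P &, injective phi}.
  move=> r1 r2 h1 h2 e.
  have [hR1 _ _ _ _] := facts r1 h1; have [hR2 _ _ _ _] := facts r2 h2.
  have ew : srt r1 = srt r2.
    apply: Wn_ext => i k.
    case: (ltnP i l) => hi; last by rewrite !zero_out ?hi.
    case: (ltnP k l) => hk; last by rewrite !zero_out ?hk ?orbT.
    have hi' : (i < size a)%N by rewrite (sizeA _ h1).
    have hk' : (k < size a)%N by rewrite (sizeA _ h1).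
    have := congr1 (fun M : 'M['I_(sumn a).+1]_(size a) => (M (Ordinal hi') (Ordinal hk') : nat)) e.
    have := congr1 (fun M : 'M['I_(sumn a).+1]_(size a) => (M (Ordinal hi') (Ordinal hi') : nat)) e.
    rewrite /= !phiE //= eqxx mul1n.
    case: (eqVneq i k) => [->|ne]; first lia.
    by rewrite mul0n !addn0.
  rewrite -(Reps_fix (conjM_equiv _ _) hR1) -(Reps_fix (conjM_equiv _ _) hR2).
  apply: rep_eq; first exact: (conjM_equiv _ _).
  apply: conjM_trans (proj2 (srt_spec r1)) _; rewrite ew; apply: conjM_sym.
  exact: (proj2 (srt_spec r2)).
rewrite -(card_in_imset phiinj); apply: subset_leq_card; apply/subsetP => A /imsetP [r hr ->].
rewrite inE; apply/andP; split.
  apply/eqP/matrixP => i k; rewrite mxE; apply: val_inj; rewrite /= !phiE // Wn_sym eq_sym.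
  by case: eqP => [->|].
apply/forallP => i; apply/eqP.
rewrite (eq_bigr (fun k : 'I_(size a) => Wn (srt r) i k + (i == k :> nat) * Wn (srt r) i i)%N);
  last by move=> k _; rewrite phiE.
rewrite -(big_mkord xpredT (fun k => Wn (srt r) i k + (nat_of_ord i == k) * Wn (srt r) i i)%N).
have := ltn_ord i; move: (nat_of_ord i) => ii; rewrite (sizeA _ hr) => hi.
rewrite big_split /= sum_delta //.
have [_ hs e1 e2 ha] := facts r hr.
rewrite ha (nth_map 0%N) ?size_iota // nth_iota // add0n.
rewrite /Dg; congr (_ + _)%N; apply/esym/sum_ext0.
  rewrite -e2; apply: leq_trans (lc_le _) _; by rewrite leq_mul2l totM_le orbT.
by move=> k hk; apply: zero_out => //; rewrite hk orbT.
Qed.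

Local Open Scope ring_scope.

Lemma conjY_entry (R : realFieldType) d (s : 'S_d) (X : 'M[R]_d) i j :
  (perm_mx s *m X *m (perm_mx s)^T) i j = X (s i) (s j).
Proof.
by rewrite tr_perm_mx -row_permE -(col_permE s) !mxE.
Qed.

Lemma Xk_ut (R : realFieldType) d (X : 'M[R]_d) i j : X^T = X ->
  X (val (ut i j)).1 (val (ut i j)).2 = X i j.
Proof.
move=> hX; rewrite /=; case: ifP => // _.
by rewrite -[in RHS]hX mxE.
Qed.

Definition mon (R : realFieldType) d m (mu : Mon d m) (X : 'M[R]_d) : R :=
  \prod_(k : UT d) (X (val k).1 (val k).2) ^+ (val mu k : nat).

Lemma polyEvalE (R : realFieldType) d m (c : PolyV R d m) X :
  polyEval c X = \sum_(mu : Mon d m) c mu * mon mu X.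
Proof. by []. Qed.

Lemma actM_inj d m (s : 'S_d) : injective (@actM d m s).
Proof.
by apply: (can_inj (g := actM s^-1%g)) => mu; rewrite actM_comp mulVg actM1.
Qed.

Lemma polyEval_act (R : realFieldType) d m (c : PolyV R d m) (s : 'S_d) X : X^T = X ->
  polyEval c (perm_mx s *m X *m (perm_mx s)^T) = polyEval [ffun nu => c (actM s nu)] X.
Proof.
move=> hX; rewrite !polyEvalE.
have key : forall k : UT d, (perm_mx s *m X *m (perm_mx s)^T) (val k).1 (val k).2
    = X (val (actUT s k)).1 (val (actUT s k)).2.
  by move=> k; rewrite conjY_entry /actUT Xk_ut.
rewrite (reindex_inj (@actM_inj d m s)); apply: eq_bigr => nu _.
rewrite ffunE; congr (_ * _); rewrite /mon.
rewrite [in RHS](reindex_inj (@actUT_inj d s)); apply: eq_bigr => k _.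
by rewrite key /= ffunE.
Qed.

Lemma digits (B N : nat) (a b : 'I_N -> nat) : (forall i, a i < B)%N -> (forall i, b i < B)%N ->
  (\sum_(i < N) a i * B ^ i = \sum_(i < N) b i * B ^ i)%N -> forall i, a i = b i.
Proof.
elim: N a b => [|N IH] a b ha hb e i; first by case: i.
move: e; rewrite !big_ord_recl /= !expn0 !muln1.
have hs : forall c : 'I_N.+1 -> nat, (\sum_(i < N) c (lift ord0 i) * B ^ (bump 0 i) =
    B * \sum_(i < N) c (lift ord0 i) * B ^ i)%N.
  move=> c; rewrite big_distrr; apply: eq_bigr => j _.
  by rewrite /bump leq0n add1n expnS mulnCA.
rewrite !hs.
move=> e.
have e0 : a ord0 = b ord0.
  have := congr1 (modn^~ B) e; rewrite !(addnC (a ord0)) !(addnC (b ord0)).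
  by rewrite !(mulnC B) !modnMDl !modn_small.
have hB : (0 < B)%N by apply: leq_ltn_trans (ha ord0).
rewrite e0 in e; move/addnI: e => /eqP; rewrite eqn_mul2l gtn_eqF //= => /eqP e.
case: (unliftP ord0 i) => [j ->|->] //.
exact: (IH (fun j => a (lift ord0 j)) (fun j => b (lift ord0 j))).
Qed.

Definition Eexp d m (mu : Mon d m) : nat :=
  (\sum_(k : UT d) (val mu k : nat) * m.+1 ^ (enum_rank k))%N.

Lemma Eexp_inj d m : injective (@Eexp d m).
Proof.
move=> mu nu; rewrite /Eexp.
rewrite (reindex (fun i : 'I_#|{: UT d}| => enum_val i)); last first.
  by exists enum_rank => x _; [exact: enum_valK | exact: enum_rankK].
rewrite [in X in _ = X -> _](reindex (fun i : 'I_#|{: UT d}| => enum_val i)); last first.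
  by exists enum_rank => x _; [exact: enum_valK | exact: enum_rankK].
rewrite [X in X = _ -> _](eq_bigr (fun i => (val mu (enum_val i) : nat) * m.+1 ^ i)%N); last first.
  by move=> i _; rewrite /= (_ : nat_of_ord (enum_rank (enum_val i)) = i) //; congr nat_of_ord; exact: enum_valK.
rewrite [X in _ = X -> _](eq_bigr (fun i => (val nu (enum_val i) : nat) * m.+1 ^ i)%N); last first.
  by move=> i _; rewrite /= (_ : nat_of_ord (enum_rank (enum_val i)) = i) //; congr nat_of_ord; exact: enum_valK.
move=> e; apply: val_inj; apply/ffunP => k; apply: val_inj.
rewrite -(enum_rankK k).
apply: (digits (B := m.+1) (a := fun i => (val mu (enum_val i) : nat))
                (b := fun i => (val nu (enum_val i) : nat))).
- by move=> i; rewrite ltn_ord.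
- by move=> i; rewrite ltn_ord.
exact: e.
Qed.

Definition Xt (R : realFieldType) d m (t : R) : 'M[R]_d :=
  \matrix_(i, j) t ^+ (m.+1 ^ enum_rank (ut i j))%N.

Lemma Xt_sym (R : realFieldType) d m (t : R) : (Xt d m t)^T = Xt d m t.
Proof. by apply/matrixP => i j; rewrite !mxE ut_sym. Qed.

Lemma mon_Xt (R : realFieldType) d m (mu : Mon d m) (t : R) :
  mon mu (Xt d m t) = t ^+ Eexp mu.
Proof.
rewrite /mon /Eexp; apply: (big_ind2 (fun (a : R) (n : nat) => a = t ^+ n)).
- by rewrite expr0.
- by move=> x1 x2 y1 y2 -> ->; rewrite exprD.
move=> k _; by rewrite mxE ut_val -exprM mulnC.
Qed.

Lemma polyEval_inj (R : realFieldType) d m (c : PolyV R d m) :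
  (forall X : 'M[R]_d, X^T = X -> polyEval c X = 0) -> c = 0.
Proof.
move=> hc.
have Z : forall t : R, \sum_(mu : Mon d m) c mu * t ^+ Eexp mu = 0.
  move=> t; apply: etrans (hc _ (Xt_sym d m t)); rewrite polyEvalE.
  by apply: eq_bigr => mu _; rewrite mon_Xt.
pose p : {poly R} := \sum_(mu : Mon d m) (c mu : R) *: 'X^(Eexp mu).
have pE : forall t, p.[t] = \sum_(mu : Mon d m) c mu * t ^+ Eexp mu.
  by move=> t; rewrite /p horner_sum; apply: eq_bigr => mu _; rewrite hornerZ hornerXn.
have p0 : p = 0.
  apply/eqP; apply: contraT => hp.
  have := max_poly_roots hp (rs := [seq i%:R | i <- iota 0 (size p)]).
  rewrite size_map size_iota ltnn; apply.
    by apply/allP => x /mapP [i _ ->]; rewrite /root pE Z.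
  by rewrite map_inj_uniq ?iota_uniq // => a b /eqP; rewrite eqr_nat => /eqP.
apply/ffunP => mu; rewrite ffunE.
have := congr1 (fun q : {poly R} => q`_(Eexp mu)) p0.
rewrite coef0 /p coef_sum (bigD1 mu) //= coefZ coefXn eqxx mulr1 big1 ?addr0 //.
move=> nu hnu; rewrite coefZ coefXn (inj_eq (@Eexp_inj d m)) eq_sym (negbTE hnu) mulr0.
by [].
Qed.

Local Open Scope ring_scope.

Lemma polyEval_sub (R : realFieldType) d m (c1 c2 : PolyV R d m) X :
  polyEval (c1 - c2) X = polyEval c1 X - polyEval c2 X.
Proof.
rewrite !polyEvalE -sumrB; apply: eq_bigr => mu _; by rewrite !ffunE mulrBl.
Qed.

Lemma inv_iff (R : realFieldType) d m (c : PolyV R d m) :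
  Sd_invariant c <-> forall mu, c mu = c (rep (@conjM d m) mu).
Proof.
split.
  move=> hinv.
  have inv_s : forall s nu, c (actM s nu) = c nu.
    move=> s nu.
    have := @polyEval_inj R d m ([ffun nu => c (actM s nu)] - c).
    have H : forall X : 'M[R]_d, X^T = X ->
        polyEval ([ffun nu => c (actM s nu)] - c) X = 0.
      by move=> X hX; rewrite polyEval_sub -polyEval_act // hinv // subrr.
    move/(_ H)/eqP; rewrite subr_eq0 => /eqP /ffunP /(_ nu).
    by rewrite ffunE.
  move=> mu; have := rep_rel mu (conjM_equiv d m); case/existsP => s /eqP <-.
  by rewrite inv_s.
move=> h s X hX; rewrite polyEval_act //; congr polyEval; apply/ffunP => nu.
rewrite ffunE h [in RHS]h; congr (c _); apply/esym/rep_eq; first exact: conjM_equiv.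
by apply/existsP; exists s.
Qed.

Lemma sc (R : realFieldType) (a b : R) : (a : R^o) *: (b : R^o) = a * b.
Proof. by []. Qed.

Definition ind (R : realFieldType) d m (r : Mon d m) : PolyV R d m :=
  [ffun mu => ((rep (@conjM d m) mu == r)%:R : R)].

Lemma dim_inv (R : realFieldType) d m :
  dimIs (@Sd_invariant R d m) (ncl (@conjM d m)).
Proof.
set S := enum (Reps (@conjM d m)).
set X := [seq @ind R d m r | r <- S].
have E := conjM_equiv d m.
have repK : forall mu, rep (@conjM d m) (rep (@conjM d m) mu) = rep (@conjM d m) mu.
  by move=> mu; apply: Reps_fix => //; apply: imset_f.
exists <<X>>%VS; split.
  move=> v; rewrite inv_iff; split.
    move=> hv mu; rewrite (coord_span (X := in_tuple X) hv) !sum_ffunE.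
    apply: eq_bigr => i _; rewrite !ffunE; congr (_ * _).
    rewrite /= (nth_map (zeroM d m)); last by rewrite -(size_map (@ind R d m)).
    by rewrite !ffunE repK.
  move=> hv.
  have -> : v = \sum_(r in Reps (@conjM d m)) v r *: @ind R d m r.
    apply/ffunP => mu; rewrite sum_ffunE (bigD1 (rep (@conjM d m) mu)) /=; last exact: imset_f.
    rewrite !ffunE eqxx sc mulr1 -hv big1 ?addr0 // => r /andP [_ hr].
    by rewrite !ffunE eq_sym (negbTE hr) sc mulr0.

  apply: memv_suml => r hr; apply: memvZ; apply: memv_span; apply: map_f.
  by rewrite mem_enum.
have fX : free X.
  have H := @freeP _ _ _ (in_tuple X); apply/H => k hk i.
  have hi : (i < size S)%N by rewrite -(size_map (@ind R d m)) ltn_ord.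
  set r := nth (zeroM d m) S i.
  have rR : r \in Reps (@conjM d m) by rewrite -mem_enum mem_nth.
  have := congr1 (fun f : PolyV R d m => f r) hk.
  rewrite sum_ffunE ffunE (bigD1 i) //= big1 ?addr0.
    by rewrite ffunE (nth_map (zeroM d m)) // ffunE Reps_fix // eqxx sc mulr1.
  move=> j hj; rewrite ffunE (nth_map (zeroM d m)); last by rewrite -(size_map (@ind R d m)) ltn_ord.
  rewrite ffunE Reps_fix // (nth_uniq _ hi) ?enum_uniq //; last by rewrite -(size_map (@ind R d m)) ltn_ord.
  rewrite sc; case: eqP => [/val_inj e|_]; last by rewrite mulr0.
  by move: hj; rewrite e eqxx.
by rewrite (eqP fX) size_map /ncl cardE.
Qed.

Close Scope ring_scope.
Unset Implicit Arguments.

Theorem mainTheorem7 (R : realFieldType) (m : nat) :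
  exists D : nat,
    (forall d : nat, (2 * m <= d)%N ->
       dimIs (@Sd_invariant R d m) D) /\
    (D <= \sum_(j < m.+1) sum_q (2 * j))%N.
Proof.
exists (ncl (@conjM (2 * m) m)); split.
  move=> d hd; rewrite (@ncl_indep (2 * m) d m) //; exact: dim_inv.
exact: bound.
Qed.
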